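(* Let $p$ be a prime, $s\geq 2$, and let $t_1\geq1,t_2,\dots,t_s$ be nonnegative integers with $t_s\geq 1$; put $N=t_1+\cdots+t_s$. Let $\mathbf{w}_i^{(s)}$ be the $i$th row of $A^{t_1,\dots,t_s}$ (over $\mathbb{Z}_{p^s}$) and $\mathbf{w}_i^{(s+1)}$ the $i$th row of $A^{1,t_1-1,t_2,\dots,t_{s-1},t_s-1}$ (over $\mathbb{Z}_{p^{s+1}}$). Then: (i) $\tilde{\tau}_{s+1}(p^{q}\mathbf{w}_i^{(s+1)})=p^{q}\mathbf{w}_i^{(s)}$ for all $i\in\{2,\dots,N-1\}$ and $q\in\{0,\dots,\sigma_i-1\}$, where $\operatorname{ord}(\mathbf{w}_i^{(s)})=p^{\sigma_i}$; (ii) $\tilde{\tau}_{s+1}(p^{j+1}\mathbf{w}_1^{(s+1)})=p^{j}\mathbf{w}_1^{(s)}$ for all $j\in\{0,\dots,s-1\}$; (iii) $\tilde{\tau}_{s+1}(\mathbf{w}_1^{(s+1)})=\mathbf{w}_N^{(s)}$.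
   Context: For $r\geq1$ and $u\in\mathbb{Z}_{p^r}$ with $p$-ary expansion $u=\sum_{i=0}^{r-1}u_ip^i$, $\phi_r(u)=(u_{r-1},\dots,u_{r-1})+(u_0,\dots,u_{r-2})Y_{r-1}\in\mathbb{Z}_p^{p^{r-1}}$, where $Y_1=(0\ 1\ \cdots\ p-1)$ and $Y_k$ has first $k-1$ rows $(Y_{k-1}\ \cdots\ Y_{k-1})$ ($p$ copies) and last row $(0,\dots,0,1,\dots,1,\dots,p-1,\dots,p-1)$ (blocks of length $p^{k-1}$); $\phi_1=\mathrm{id}$; $\Phi_r$ applies $\phi_r$ coordinatewise and concatenates (it is injective). For $r\geq 2$, $\gamma_r$ is the permutation of $\mathbb{Z}_p^{p^{r-1}}$ given by $\gamma_r(\mathbf{x})_{j+ip+1}=\mathbf{x}_{jp^{r-2}+i+1}$ for $j\in\{0,\dots,p-1\}$, $i\in\{0,\dots,p^{r-2}-1\}$. Define $\tau_r:\mathbb{Z}_{p^r}\to\mathbb{Z}_{p^{r-1}}^p$ by $\tau_r(u)=\Phi_{r-1}^{-1}(\gamma_r^{-1}(\phi_r(u)))$. For $\mathbf{u}=(u_1,\dots,u_n)\in\mathbb{Z}_{p^r}^n$ with $\tau_r(u_i)=(u_{i,1},\dots,u_{i,p})$, set $\tilde{\tau}_r(\mathbf{u})=(u_{1,1},u_{2,1},\dots,u_{n,1},u_{1,2},\dots,u_{n,2},\dots,u_{1,p},\dots,u_{n,p})\in\mathbb{Z}_{p^{r-1}}^{pn}$. For $\mathbb{Z}_{p^r}$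 and $1\le i\le r$ let $T_i=\{jp^{i-1}:0\le j\le p^{r-i+1}-1\}$. The matrix $A^{a_1,\dots,a_r}$ over $\mathbb{Z}_{p^r}$ ($a_1\geq1$) is built recursively: start with $(1)$; appending a row of type $i$ to $A$ replaces $A$ by the matrix with top part $(A\ \cdots\ A)$ ($p^{r-i+1}$ copies) and new last row consisting of constant blocks $0\cdot p^{i-1},1\cdot p^{i-1},\dots,(p^{r-i+1}-1)p^{i-1}$, each block of the length of a row of $A$; one appends $a_1-1$ rows of type 1, then $a_2$ of type 2, ..., then $a_r$ of type $r$. The order $\operatorname{ord}(\mathbf{u})$ of a vector is the least $m\geq1$ with $m\mathbf{u}=\mathbf{0}$. *)

(* Defs.v *)
(* plain nat arithmetic.
   Conventions: an element of Z_m is represented by a nat in [0, m);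
   vectors are [seq nat]; indices in the paper are 1-based, here 0-based
   unless stated otherwise. *)
From mathcomp Require Import all_boot.
Set Implicit Arguments. Unset Strict Implicit. Unset Printing Implicit Defensive.

Section Defs.
Variable p : nat.

Definition digit (u i : nat) : nat := u %/ p ^ i %% p.

(* Y p k i c = entry (row i, column c), 0-indexed, of the matrix Y_k
   (k x p^k).  Y_1 = (0 1 ... p-1); Y_{k+1} has first k rows equal to
   (Y_k ... Y_k) (p copies, column c lies in copy c / p^k at position
   c mod p^k) and last row with constant blocks 0,1,..,p-1 of length p^k. *)
Fixpoint Y (k : nat) : nat -> nat -> nat :=
  match k with
  | 0 => fun _ _ => 0
  | k'.+1 => fun i c =>
      if k' == 0 then c
      else if i < k' then Y k' i (c %% p ^ k') else c %/ p ^ k'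
  end.

(* phi_r : Z_{p^r} -> Z_p^{p^{r-1}},
   phi_r(u) = (u_{r-1},...,u_{r-1}) + (u_0,...,u_{r-2}) Y_{r-1}  (mod p);
   for r = 1 this is the identity on Z_p. *)
Definition phi (r u : nat) : seq nat :=
  [seq (digit u r.-1 + \sum_(i < r.-1) digit u i * Y r.-1 i c) %% p
  | c <- iota 0 (p ^ r.-1)].

Definition Phi (r : nat) (v : seq nat) : seq nat := flatten (map (phi r) v).

Definition gamma (r : nat) (x : seq nat) : seq nat :=
  [seq nth 0 x ((k %% p) * p ^ (r - 2) + k %/ p) | k <- iota 0 (p ^ r.-1)].

(* tau_r(u) = Phi_{r-1}^{-1}(gamma_r^{-1}(phi_r(u))) in Z_{p^{r-1}}^p,
   i.e. the (unique, Phi_{r-1} being injective) v with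
   Phi_{r-1}(v) = gamma_r^{-1}(phi_r u), equivalently
   gamma_r(Phi_{r-1}(v)) = phi_r(u).  Default nseq p 0 if none exists. *)
Definition tau (r u : nat) : seq nat :=
  odflt (nseq p 0)
    (omap (fun v : p.-tuple 'I_(p ^ r.-1) => map val (tval v))
       [pick v : p.-tuple 'I_(p ^ r.-1) |
          gamma r (Phi r.-1 (map val (tval v))) == phi r u]).

Definition tau_tilde (r : nat) (u : seq nat) : seq nat :=
  flatten [seq [seq nth 0 (tau r x) k | x <- u] | k <- iota 0 p].

Definition scal (r c : nat) (w : seq nat) : seq nat :=
  [seq (c * x) %% p ^ r | x <- w].

(* ord(w) over Z_{p^r}: least m >= 1 with m w = 0 (p^r always works) *)
Definition ordv (r : nat) (w : seq nat) : nat :=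
  (find (fun m => all (fun x => m * x %% p ^ r == 0) w) (iota 1 (p ^ r))).+1.

Definition appendrow (r i : nat) (A : seq (seq nat)) : seq (seq nat) :=
  rcons [seq flatten (nseq (p ^ (r - i + 1)) w) | w <- A]
        (flatten [seq nseq (size (head [::] A)) (j * p ^ (i - 1))
                 | j <- iota 0 (p ^ (r - i + 1))]).

(* A^{a_1,...,a_r} over Z_{p^r}, with r = size a: start from (1), append
   a_1 - 1 rows of type 1, then a_2 rows of type 2, ..., a_r rows of type r. *)
Definition Amat (a : seq nat) : seq (seq nat) :=
  foldl (fun A ik => iter ik.2 (appendrow (size a) ik.1) A) [:: [:: 1]]
        (zip (iota 1 (size a)) ((head 0 a).-1 :: behead a)).

(* i-th row, 1-indexed *)
Definition row_of (A : seq (seq nat)) (i : nat) : seq nat := nth [::] A i.-1.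

End Defs.

(* Main.v *)
Require Import Defs.
From mathcomp Require Import all_boot zify.
Set Implicit Arguments. Unset Strict Implicit. Unset Printing Implicit Defensive.

Section Tau.
Variable p : nat.
Hypothesis p_gt1 : 1 < p.
Let p_gt0 : 0 < p. Proof. exact: ltnW. Qed.

Lemma digit_mod c k i : i < k -> digit p (c %% p ^ k) i = digit p c i.
Proof.
move=> ik; rewrite /digit divn_modl; last by rewrite dvdn_exp2l // ltnW.
rewrite -expnB ?(ltnW ik) //; apply: modn_dvdm.
by rewrite -(prednK (n:=k - i)) ?subn_gt0 // expnS dvdn_mulr.
Qed.

Lemma Y_digit k i c : i < k -> c < p ^ k -> Y p k i c = digit p c i.
Proof.
elim: k i c => [//|k IH] i c ik ck /=.
case: eqP => [k0|k0].
  subst k; move: ik; rewrite ltnS leqn0 => /eqP ->.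
  by rewrite /digit expn0 divn1 modn_small // -(expn1 p).
case: ifP => ik'.
  rewrite IH //; [exact: digit_mod | by rewrite ltn_mod expn_gt0 p_gt0].
have -> : i = k by apply/eqP; rewrite eqn_leq -ltnS ik leqNgt ik'.
rewrite /digit modn_small // ltn_divLR ?expn_gt0 ?p_gt0 //. by rewrite -expnS.
Qed.

Lemma size_phi r u : size (phi p r u) = p ^ r.-1.
Proof. by rewrite size_map size_iota. Qed.

Lemma nth_phi r u c : c < p ^ r.-1 ->
  nth 0 (phi p r u) c = (digit p u r.-1 + \sum_(i < r.-1) digit p u i * digit p c i) %% p.
Proof.
move=> cr; rewrite (nth_map 0) ?size_iota // nth_iota // add0n.
congr (_ %% _); congr (_ + _); apply: eq_bigr => i _.
by rewrite Y_digit.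
Qed.

Lemma size_gamma r x : size (gamma p r x) = p ^ r.-1.
Proof. by rewrite size_map size_iota. Qed.

Lemma nth_gamma r x k : k < p ^ r.-1 ->
  nth 0 (gamma p r x) k = nth 0 x ((k %% p) * p ^ (r - 2) + k %/ p).
Proof. by move=> kr; rewrite (nth_map 0) ?size_iota // nth_iota. Qed.

Lemma nth_flatten_unif (T : Type) (x0 : T) (d : nat) (F : nat -> seq T) L vs m :
  0 < L -> (forall v, size (F v) = L) -> m < size vs * L ->
  nth x0 (flatten (map F vs)) m = nth x0 (F (nth d vs (m %/ L))) (m %% L).
Proof.
move=> L0 FL; elim: vs m => [|v vs IH] m //= mlt.
rewrite nth_cat FL; case: ltnP => mL.
  by rewrite divn_small // modn_small.
have [k ek] : exists k, m = k + L by exists (m - L); rewrite subnK.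
rewrite ek addnK IH; last by move: mlt; rewrite ek mulSn addnC ltn_add2l.
by rewrite divnDr ?dvdnn // divnn L0 addn1 /= modnDr.
Qed.


Lemma digits_eq r u u' : u < p ^ r -> u' < p ^ r ->
  (forall i, i < r -> digit p u i = digit p u' i) -> u = u'.
Proof.
elim: r u u' => [|r IH] u u'.
  by rewrite expn0 !ltnS !leqn0 => /eqP -> /eqP ->.
move=> ur ur' H.
rewrite (divn_eq u p) (divn_eq u' p).
have H0 := H 0 isT; rewrite /digit expn0 !divn1 in H0.
rewrite H0; congr (_ * _ + _); apply: IH.
- by rewrite ltn_divLR // -expnSr.
- by rewrite ltn_divLR // -expnSr.
move=> i ir; have := H i.+1 ir; rewrite /digit expnS !divnMA; apply.
Qed.

Lemma digit_lt u i : digit p u i < p.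
Proof. by rewrite ltn_mod. Qed.

Lemma digit_exp i j : digit p (p ^ i) j = (i == j).
Proof.
rewrite /digit; case: ltngtP => ij.
- by rewrite divn_small ?mod0n // ltn_exp2l.
- rewrite -expnB ?(ltnW ij) //; apply/eqP; rewrite -/(dvdn p _).
  by rewrite -(prednK (n:=i - j)) ?subn_gt0 // expnS dvdn_mulr.
- by rewrite ij divnn expn_gt0 p_gt0 modn_small.
Qed.

Lemma digit0 i : digit p 0 i = 0.
Proof. by rewrite /digit div0n mod0n. Qed.

Lemma phi_inj r u u' : u < p ^ r.+1 -> u' < p ^ r.+1 ->
  phi p r.+1 u = phi p r.+1 u' -> u = u'.
Proof.
move=> ur ur' E.
have N c : c < p ^ r -> nth 0 (phi p r.+1 u) c = nth 0 (phi p r.+1 u') c by rewrite E.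
have top : digit p u r = digit p u' r.
  have pr0 : 0 < p ^ r by rewrite expn_gt0 p_gt0.
  have := N 0 pr0.
  rewrite !nth_phi ?expn_gt0 ?p_gt0 //=.
  rewrite !big1 => [|i _|i _]; try by rewrite digit0 muln0.
  by rewrite !addn0 !modn_small ?digit_lt.
apply: (@digits_eq r.+1) => // i; rewrite ltnS leq_eqVlt => /orP [/eqP -> //|ir].
have := N (p ^ i); rewrite ltn_exp2l // => /(_ ir).
rewrite !nth_phi /= ?ltn_exp2l //.
have S w : \sum_(j < r) digit p w j * digit p (p ^ i) j = digit p w i.
  rewrite (bigD1 (Ordinal ir)) //= big1 => [|j /negbTE ne].
    by rewrite digit_exp eqxx muln1 addn0.
  rewrite digit_exp; case: eqP => [eij|]; last by rewrite muln0.
  by move: ne; rewrite -val_eqE /= eij eqxx.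
rewrite !S top => /eqP; rewrite eqn_modDl => /eqP.
by rewrite !modn_small ?digit_lt.
Qed.

Lemma size_Phi r a : size (Phi p r a) = size a * p ^ r.-1.
Proof. by elim: a => //= x a IH; rewrite size_cat IH size_phi mulSn. Qed.

Lemma Phi_inj r a b : size a = size b -> all (fun x => x < p ^ r.+1) a ->
  all (fun x => x < p ^ r.+1) b -> Phi p r.+1 a = Phi p r.+1 b -> a = b.
Proof.
elim: a b => [|x a IH] [|y b] //= [sz] /andP [xl al] /andP [yl bl] /eqP.
rewrite eqseq_cat ?size_phi // => /andP [/eqP e1 /eqP e2].
by rewrite (phi_inj xl yl e1) (IH b).
Qed.

Lemma gamma_inj n x y : size x = p ^ n.+1 -> size y = p ^ n.+1 ->
  gamma p n.+2 x = gamma p n.+2 y -> x = y.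
Proof.
move=> sx sy E; apply: (eq_from_nth (x0 := 0)); first by rewrite sx sy.
move=> m; rewrite sx => mlt.
have pn0 : 0 < p ^ n by rewrite expn_gt0 p_gt0.
have q1 : m %/ p ^ n < p by rewrite ltn_divLR // -expnS.
have q2 : m %% p ^ n < p ^ n by rewrite ltn_mod.
set k := m %/ p ^ n + p * (m %% p ^ n).
have klt : k < p ^ n.+1.
  rewrite /k expnS; apply: (@leq_trans (p * (m %% p ^ n).+1)).
    by rewrite mulnS ltn_add2r.
  by rewrite leq_mul2l q2 orbT.
have km : (k %% p) * p ^ (n.+2 - 2) + k %/ p = m.
  by rewrite !subSS subn0 /k [_ + p * _]addnC !(mulnC p (m %% _)) modnMDl (modn_small q1) divnMDl // (divn_small q1) addn0 -divn_eq.
have := congr1 (fun z => nth 0 z k) E; rewrite /= !nth_gamma // km; apply.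
Qed.

Lemma tau_spec n u vs : size vs = p -> all (fun x => x < p ^ n.+1) vs ->
  gamma p n.+2 (Phi p n.+1 vs) = phi p n.+2 u -> tau p n.+2 u = vs.
Proof.
move=> svs avs E; rewrite /tau; case: pickP => [v /eqP Hv | H0] /=.
  apply: (Phi_inj (r := n)).
  - by rewrite size_map size_tuple.
  - by apply/allP => z /mapP [w _ ->].
  - exact: avs.
  apply: (gamma_inj (n := n)); rewrite ?size_Phi ?size_map ?size_tuple ?svs -?expnS //.
  by rewrite Hv E.
pose w := pmap (insub : nat -> option 'I_(p ^ n.+1)) vs.
have ew : map val w = vs.
  rewrite pmap_filter; last exact: insubK.
  apply/all_filterP; apply/allP => z zv /=.
  by rewrite isSome_insub; move/allP: avs => /(_ z zv).
have Hw : size w == p by rewrite -(size_map val) ew svs.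
have := H0 (Tuple Hw) => /=.
by rewrite ew E eqxx.
Qed.

Lemma digit_pS y i : digit p (p * y) i.+1 = digit p y i.
Proof. by rewrite /digit expnS divnMA mulKn. Qed.

Lemma digit_p0 y : digit p (p * y) 0 = 0.
Proof. by rewrite /digit expn0 divn1 mulnC modnMl. Qed.

Lemma digit_divp k i : digit p (k %/ p) i = digit p k i.+1.
Proof. by rewrite /digit expnS divnMA. Qed.

Lemma digit_1S i : digit p 1 i.+1 = 0.
Proof.
by rewrite /digit divn_small ?mod0n // -(expn0 p) ltn_exp2l.
Qed.

Lemma digit_mulexp j n i : j < p -> digit p (j * p ^ n) i = if i == n then j else 0.
Proof.
move=> jp; rewrite /digit; case: ltngtP => ni.
- rewrite -(subnK (ltnW ni)) expnD mulnA mulnK ?expn_gt0 ?p_gt0 //.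
  apply/eqP; rewrite -/(dvdn p _); apply: dvdn_mull.
  by rewrite -(prednK (n:=n - i)) ?subn_gt0 // expnS dvdn_mulr.
- rewrite divn_small ?mod0n //; apply: (leq_trans (n := p ^ n.+1)).
    by rewrite expnS ltn_mul2r jp expn_gt0 p_gt0.
  by rewrite leq_exp2l.
- by rewrite ni mulnK ?expn_gt0 ?p_gt0 // modn_small.
Qed.

Lemma nth_Phi_gamma n vs k : size vs = p -> k < p ^ n.+1 ->
  nth 0 (gamma p n.+2 (Phi p n.+1 vs)) k =
  nth 0 (phi p n.+1 (nth 0 vs (k %% p))) (k %/ p).
Proof.
move=> svs klt; have pn0 : 0 < p ^ n by rewrite expn_gt0 p_gt0.
have kp : k %/ p < p ^ n by rewrite ltn_divLR // mulnC -expnS.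
have kp' : k %% p < p by rewrite ltn_mod.
rewrite nth_gamma // !subSS subn0 /Phi (@nth_flatten_unif _ 0 0 _ _ _ _ pn0).
  rewrite divnMDl // (divn_small kp) addn0.
  by rewrite modnMDl (modn_small kp).
- by move=> v; rewrite size_phi.
rewrite svs; apply: (@leq_trans ((k %% p).+1 * p ^ n)).
  by rewrite mulSn addnC ltn_add2r.
by rewrite leq_mul2r kp' orbT.
Qed.

Lemma tau_p n y : y < p ^ n.+1 -> tau p n.+2 (p * y) = nseq p y.
Proof.
move=> yl; apply: tau_spec; first by rewrite size_nseq.
  by rewrite all_nseq yl orbT.
apply: (eq_from_nth (x0 := 0)); first by rewrite size_gamma size_phi.
move=> k; rewrite size_gamma => klt.
rewrite nth_Phi_gamma ?size_nseq // nth_nseq ltn_mod p_gt0.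
rewrite !nth_phi /= ?klt //; last by rewrite ltn_divLR // mulnC -expnS.
rewrite big_ord_recl /= digit_p0 mul0n add0n digit_pS.
congr ((_ + _) %% _); apply: eq_bigr => i _.
by rewrite digit_divp /bump /= add1n digit_pS.
Qed.

Lemma tau_1 n : tau p n.+2 1 = [seq j * p ^ n | j <- iota 0 p].
Proof.
apply: tau_spec; first by rewrite size_map size_iota.
  apply/allP => z /mapP [j]; rewrite mem_iota add0n => /andP [_ jp] ->.
  by rewrite expnS ltn_mul2r jp expn_gt0 p_gt0.
apply: (eq_from_nth (x0 := 0)); first by rewrite size_gamma size_phi.
move=> k; rewrite size_gamma => klt.
rewrite nth_Phi_gamma ?size_map ?size_iota //.
have kp' : k %% p < p by rewrite ltn_mod.
rewrite (nth_map 0) ?size_iota // nth_iota // add0n.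
rewrite !nth_phi /= ?klt //; last by rewrite ltn_divLR // mulnC -expnS.
rewrite digit_mulexp // eqxx big1 => [|i _]; last first.
  by rewrite digit_mulexp // (ltn_eqF (ltn_ord i)).
rewrite big_ord_recl big1 => [|i _]; last by rewrite digit_1S.
rewrite digit_1S /digit !expn0 !divn1 (modn_small p_gt1) mul1n.
by rewrite addn0 add0n modn_mod.
Qed.

End Tau.

Section Mat.
Variable p : nat.
Hypothesis p_gt1 : 1 < p.
Let p_gt0 : 0 < p. Proof. exact: ltnW. Qed.

Definition F r ps M := foldl (fun A (ik : nat * nat) => iter ik.2 (appendrow p r ik.1) A) M ps.

Definition mrel (M M' : seq (seq nat)) := exists h T,
  [/\ M = h :: T, M' = h :: map (map (muln p)) T & all (pred1 1) h].

Lemma map_flatten_nseq (f : nat -> nat) k w :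
  map f (flatten (nseq k w)) = flatten (nseq k (map f w)).
Proof. by elim: k => //= k IH; rewrite map_cat IH. Qed.

Lemma all_flatten_nseq (a : pred nat) k w : all a w -> all a (flatten (nseq k w)).
Proof. by move=> aw; elim: k => //= k IH; rewrite all_cat aw IH. Qed.

Lemma map_const (T U : Type) (c : U) (s : seq T) : [seq c | _ <- s] = nseq (size s) c.
Proof. by elim: s => //= x s ->. Qed.

Lemma app_rel r k M M' : 0 < k -> mrel M M' -> mrel (appendrow p r k M) (appendrow p r.+1 k.+1 M').
Proof.
move=> k0 [h [T [-> -> ah]]].
exists (flatten (nseq (p ^ (r - k + 1)) h)).
exists (rcons [seq flatten (nseq (p ^ (r - k + 1)) w) | w <- T]
   (flatten [seq nseq (size h) (j * p ^ (k - 1)) | j <- iota 0 (p ^ (r - k + 1))])).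
split => //.
- rewrite /appendrow /= subSS subn1 /= map_rcons; congr (_ :: _); congr rcons.
    rewrite -!map_comp; apply: eq_map => w /=; by rewrite map_flatten_nseq.
  elim: (iota _ _) => //= j l ->; rewrite map_cat map_nseq; congr (nseq _ _ ++ _).
  by rewrite ?subn1 mulnCA -expnS prednK.
- exact: all_flatten_nseq.
Qed.

Lemma iter_rel r k x M M' : 0 < k -> mrel M M' ->
  mrel (iter x (appendrow p r k) M) (iter x (appendrow p r.+1 k.+1) M').
Proof. by move=> k0 R; elim: x => //= x IH; apply: app_rel. Qed.

Lemma F_rel r n : forall k l M M', 0 < k -> mrel M M' ->
  mrel (F r (zip (iota k n) l) M) (F r.+1 (zip (iota k.+1 n) l) M').
Proof.
elim: n => [|n IH] k [|x l] M M' k0 R //=.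
by apply: IH => //; apply: iter_rel.
Qed.

Lemma size_app r k M : size (appendrow p r k M) = (size M).+1.
Proof. by rewrite size_rcons size_map. Qed.

Lemma size_F r l : forall k M, size (F r (zip (iota k (size l)) l) M) = size M + sumn l.
Proof.
elim: l => [|x l IH] k M /=; first by rewrite addn0.
rewrite IH addnA; congr (_ + _).
elim: x => [|x IHx] /=; first by rewrite addn0.
by rewrite size_app IHx addnS.
Qed.

Lemma F_rcons r l y : forall k M,
  F r (zip (iota k (size l).+1) (rcons l y)) M = iter y (appendrow p r (k + size l)) (F r (zip (iota k (size l)) l) M).
Proof.
elim: l => [|x l IH] k M /=; first by rewrite addn0.
by rewrite IH addSnnS.
Qed.

End Mat.
Arguments F : simpl never.

Lemma AmatE p a : Amat p a = F p (size a) (zip (iota 1 (size a)) ((head 0 a).-1 :: behead a)) [:: [:: 1]].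
Proof. by []. Qed.

Lemma row_app p r M i : i < size M ->
  nth [::] (appendrow p r r M) i = flatten (nseq p (nth [::] M i)).
Proof.
move=> iM; rewrite /appendrow nth_rcons size_map iM (nth_map [::]) //.
by rewrite subnn add0n expn1.
Qed.

Lemma row_app_last p r M :
  nth [::] (appendrow p r r M) (size M) =
  flatten [seq nseq (size (head [::] M)) (j * p ^ (r - 1)) | j <- iota 0 p].
Proof. by rewrite /appendrow nth_rcons size_map ltnn eqxx subnn add0n expn1. Qed.

Lemma tt_const p r (f h : nat -> nat) (w : seq nat) : (forall x, tau p r (f x) = nseq p (h x)) ->
  tau_tilde p r (map f w) = flatten (nseq p (map h w)).
Proof.
move=> H; rewrite /tau_tilde.
have -> : [seq [seq nth 0 (tau p r x) k | x <- map f w] | k <- iota 0 p]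
   = [seq map h w | _ <- iota 0 p].
  2: by rewrite map_const size_iota.
apply/eq_in_map => k; rewrite mem_iota add0n => /andP [_ kp] /=.
rewrite -map_comp; apply: eq_map => x /=.
by rewrite H nth_nseq kp.
Qed.

Unset Implicit Arguments.

Theorem proposition2 (p s : nat) (t : seq nat) :
  prime p -> 2 <= s -> size t = s -> 1 <= head 0 t -> 1 <= last 0 t ->
  let N := sumn t in
  let A := Amat p t in
  let B := Amat p (1 :: (head 0 t).-1 :: rcons (take (s - 2) (behead t)) (last 0 t).-1) in
  (forall i, 2 <= i <= N - 1 -> forall sigma,
      ordv p s (row_of A i) = p ^ sigma -> forall q, q < sigma ->
      tau_tilde p s.+1 (scal p s.+1 (p ^ q) (row_of B i)) = scal p s (p ^ q) (row_of A i))
  /\ (forall j, j < s ->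
      tau_tilde p s.+1 (scal p s.+1 (p ^ j.+1) (row_of B 1)) = scal p s (p ^ j) (row_of A 1))
  /\ tau_tilde p s.+1 (row_of B 1) = row_of A N.
Proof.
move=> pp; have p1 := prime_gt1 pp; have p0 := ltnW p1.
case: t => [|x1 t'] s2 st; first by subst s.
case/lastP: t' st => [|m x] st; first by subst s.
rewrite /= size_rcons in st; subst s.
rewrite /= last_rcons => h1 l1.
set n := size m.
have -> : take (n.+2 - 2) (rcons m x) = m by rewrite -cats1 take_size_cat // subSS subSS subn0.
set l' := x1.-1 :: rcons m x.-1.
have sl' : size l' = n.+2 by rewrite /= size_rcons.
set A' := F p n.+2 (zip (iota 1 n.+2) l') [:: [:: 1]].
have HA : Amat p (x1 :: rcons m x) = appendrow p n.+2 n.+2 A'.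
  rewrite AmatE.
  change (F p (size (x1 :: rcons m x)) (zip (iota 1 (size (x1 :: rcons m x))) (rcons (x1.-1 :: m) x)) [:: [:: 1]] = appendrow p n.+2 n.+2 A').
  have -> : size (x1 :: rcons m x) = (size (x1.-1 :: m)).+1 by rewrite /= size_rcons.
  rewrite /A' /l'.
  change (F p (size (x1.-1 :: m)).+1 (zip (iota 1 (size (x1.-1 :: m)).+1) (rcons (x1.-1 :: m) x)) [:: [:: 1]] =
    appendrow p n.+2 n.+2 (F p (size (x1.-1 :: m)).+1 (zip (iota 1 (size (x1.-1 :: m)).+1) (rcons (x1.-1 :: m) x.-1)) [:: [:: 1]])).
  rewrite !F_rcons -{1}(prednK l1) /=.
  by [].
have HB : mrel p A' (Amat p (1 :: l')).
  rewrite AmatE.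
  change (mrel p A' (F p (size l').+1 ((1, 0) :: zip (iota 2 (size l')) l') [:: [:: 1]])).
  rewrite sl'.
  change (mrel p A' (F p n.+3 (zip (iota 2 n.+2) l') [:: [:: 1]])).
  apply: F_rel => //.
  by exists [:: 1], [::].
move: HA HB; set A := Amat p _; set B := Amat p _ => HA [h [T [eA' eB ah]]].
have hsz : x1 + sumn (rcons m x) = (size T).+2.
  have := congr1 size eA'; rewrite /A' -sl' size_F /= !sumn_rcons => E.
  move: E; rewrite -{1}(prednK h1) -{1}(prednK l1); lia.
rewrite hsz; split; [|split].
- case=> [|[|k]] // /andP [_ iN] sigma _ q _.
  have kT : k < size T by move: iN; lia.
  rewrite /row_of HA eA' eB; change (k.+2.-1) with k.+1; rewrite row_app; last by rewrite /= ltnS.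
  change (nth [::] (h :: T) k.+1) with (nth [::] T k).
  change (nth [::] (h :: map (map (muln p)) T) k.+1) with (nth [::] (map (map (muln p)) T) k).
  rewrite (@nth_map _ [::] _ [::]) // /scal -map_comp map_flatten_nseq.
  apply: tt_const => y /=.
  rewrite mulnCA (expnS p n.+2) -muln_modr (tau_p p1 (n := n.+1)) //.
  by rewrite ltn_mod expn_gt0 p0.
- move=> j _; rewrite /row_of /= HA eA' eB row_app //=.
  rewrite /scal map_flatten_nseq; apply: tt_const => y.
  rewrite (expnS p j) -mulnA (expnS p n.+2) -muln_modr (tau_p p1 (n := n.+1)) //.
  by rewrite ltn_mod expn_gt0 p0.
- rewrite /row_of /= eB HA eA'.
  have := row_app_last p n.+2 (h :: T); rewrite /= => ->.
  move/all_pred1P: ah => ->; rewrite size_nseq /tau_tilde.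
  congr flatten; apply/eq_in_map => k; rewrite mem_iota add0n => /andP [_ kp].
  rewrite map_nseq (tau_1 p1 n.+1).
  by rewrite (@nth_map _ 0 _ 0) ?size_iota // nth_iota // add0n subSS subn0.
Qed.
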